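(* Let $F:\mathbb{R}^d\to\mathbb{R}$ be $L$-smooth and $\mu$-strongly convex, $\mathbf{K}\in\mathbb{R}^{p\times d}$ nonzero, $b\in\mathrm{range}(\mathbf{K})$, and let $(x^\star,y^\star)$ be the optimal primal–dual pair described in the context. Let $(x^k,x_g^k,y^k)$ be generated by Algorithm B (described in the context) with parameters $\eta,\theta>0$, $\tau$, and $\alpha$ satisfying $0\leq \alpha \leq \mu$. Then for every $k\ge 0$, $$-\frac{1}{2\eta}\|x^{k+1} - x^k\|^2 \leq -\frac{\eta}{4}\|\mathbf{K}^T y^{k+1} - \mathbf{K}^T y^{\star}\|^2 + \eta\alpha^2\|x^{k+1} - x^{\star}\|^2 + 2\eta L\,\mathrm{D}_{F}(x_g^k, x^{\star}).$$
   Context: $F$ is $L$-smooth ($\nabla F$ is $L$-Lipschitz) and $\mu$-strongly convex ($F-\frac{\mu}{2}\|\cdot\|^2$ convex), $0<\mu\le L$. $\mathrm{D}_F(x,x') \coloneqq F(x) - F(x') -\langle\nabla F(x'),x-x'\rangle$. $x^\star$ is the unique minimizer of $F$ on $\{x:\mathbf{K}x=b\}$, and $y^\star$ is the unique vector in $\mathrm{range}(\mathbf{K})$ with $\nabla F(x^\star)+\mathbf{K}^Ty^\star=0$. Algorithm B (parameters $x^0\in\mathbb{R}^d$, $y^0=0\in\mathbb{R}^p$, $\eta,\theta,\alpha$, $\tau$): set $x_f^0=x^0$. For $k=0,1,\ldots$: $x_g^k = \tau x^k + (1-\tau)x_f^k$; $x^{k+\frac12} = (1+\eta\alpha)^{-1}\big(x^k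 - \eta(\nabla F(x_g^k) - \alpha x_g^k + \mathbf{K}^T y^k)\big)$; $y^{k+1} = y^k + \theta(\mathbf{K}x^{k+\frac12} - b)$; $x^{k+1} = (1+\eta\alpha)^{-1}\big(x^k - \eta(\nabla F(x_g^k) - \alpha x_g^k + \mathbf{K}^T y^{k+1})\big)$; $x_f^{k+1} = x_g^k + \frac{2\tau}{2-\tau}(x^{k+1}-x^k)$. *)

(* Defs.v *)
From HB Require Import structures.
From mathcomp Require Import all_boot all_order all_algebra.
From mathcomp Require Import all_classical all_reals all_analysis.
Set Implicit Arguments. Unset Strict Implicit. Unset Printing Implicit Defensive.
Import Order.TTheory GRing.Theory Num.Theory.
Local Open Scope ring_scope.

Definition dotv (R : realType) (n : nat) (u v : 'cV[R]_n) : R := (u^T *m v) 0 0.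
Definition sqnorm (R : realType) (n : nat) (u : 'cV[R]_n) : R := dotv u u.
Definition enorm (R : realType) (n : nat) (u : 'cV[R]_n) : R := Num.sqrt (sqnorm u).

Definition is_gradient (R : realType) (d : nat) (F : 'cV[R]_d -> R) (gradF : 'cV[R]_d -> 'cV[R]_d) :=
  forall x v : 'cV[R]_d,
    is_derive (0 : R) (1 : R) (fun t : R => F (x + t *: v)) (dotv (gradF x) v).

Definition L_smooth (R : realType) (d : nat) (gradF : 'cV[R]_d -> 'cV[R]_d) (L : R) :=
  forall x y, enorm (gradF x - gradF y) <= L * enorm (x - y).

Definition convex_fun (R : realType) (d : nat) (G : 'cV[R]_d -> R) :=
  forall (x y : 'cV[R]_d) (t : R), 0 <= t -> t <= 1 ->
    G (t *: x + (1 - t) *: y) <= t * G x + (1 - t) * G y.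

Definition strongly_convex (R : realType) (d : nat) (F : 'cV[R]_d -> R) (mu : R) :=
  convex_fun (fun x => F x - mu / 2 * sqnorm x).

Definition bregman (R : realType) (d : nat) (F : 'cV[R]_d -> R) (gradF : 'cV[R]_d -> 'cV[R]_d)
  (x x' : 'cV[R]_d) : R := F x - F x' - dotv (gradF x') (x - x').

Section AlgB.
Variables (R : realType) (d p : nat) (gradF : 'cV[R]_d -> 'cV[R]_d)
  (K : 'M[R]_(p, d)) (b : 'cV[R]_p) (eta theta alpha tau : R).

Definition algB_xg (s : 'cV[R]_d * 'cV[R]_d * 'cV[R]_p) : 'cV[R]_d :=
  tau *: s.1.1 + (1 - tau) *: s.1.2.

Definition algB_step (s : 'cV[R]_d * 'cV[R]_d * 'cV[R]_p) : 'cV[R]_d * 'cV[R]_d * 'cV[R]_p :=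
  let x := s.1.1 in
  let y := s.2 in
  let xg := algB_xg s in
  let xh := (1 + eta * alpha)^-1 *: (x - eta *: (gradF xg - alpha *: xg + K^T *m y)) in
  let y' := y + theta *: (K *m xh - b) in
  let x' := (1 + eta * alpha)^-1 *: (x - eta *: (gradF xg - alpha *: xg + K^T *m y')) in
  let xf' := xg + (2 * tau / (2 - tau)) *: (x' - x) in
  (x', xf', y').

Fixpoint algB_state (x0 : 'cV[R]_d) (k : nat) : 'cV[R]_d * 'cV[R]_d * 'cV[R]_p :=
  match k with
  | O => (x0, x0, 0)
  | k'.+1 => algB_step (algB_state x0 k')
  end.

Definition algB_x x0 k := (algB_state x0 k).1.1.
Definition algB_xf x0 k := (algB_state x0 k).1.2.
Definition algB_y x0 k := (algB_state x0 k).2.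
Definition algB_xgk x0 k := algB_xg (algB_state x0 k).
End AlgB.

(* Main.v *)
Require Import Defs.
From HB Require Import structures.
From mathcomp Require Import all_boot all_order all_algebra.
From mathcomp Require Import all_classical all_reals all_analysis.
From mathcomp Require Import ring lra.
Import Order.TTheory GRing.Theory Num.Theory.
Local Open Scope ring_scope.

Module Helpers.
Set Implicit Arguments. Unset Strict Implicit. Unset Printing Implicit Defensive.


Section Dot.
Variables (R : realType) (n : nat).
Implicit Types u v w : 'cV[R]_n.

Lemma dotvE u v : dotv u v = \sum_i u i 0 * v i 0.
Proof. by rewrite /dotv !mxE; apply: eq_bigr => i _; rewrite mxE. Qed.

Lemma dotvC u v : dotv u v = dotv v u.
Proof. by rewrite !dotvE; apply: eq_bigr => i _; rewrite mulrC. Qed.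

Lemma dotvDl u v w : dotv (u + v) w = dotv u w + dotv v w.
Proof. by rewrite !dotvE -big_split; apply: eq_bigr => i _; rewrite mxE mulrDl. Qed.

Lemma dotvZl a u w : dotv (a *: u) w = a * dotv u w.
Proof. by rewrite !dotvE mulr_sumr; apply: eq_bigr => i _; rewrite mxE mulrA. Qed.

Lemma dotvNl u w : dotv (- u) w = - dotv u w.
Proof. by rewrite -scaleN1r dotvZl mulN1r. Qed.

Lemma dotvBl u v w : dotv (u - v) w = dotv u w - dotv v w.
Proof. by rewrite dotvDl dotvNl. Qed.

Lemma dotvDr u v w : dotv w (u + v) = dotv w u + dotv w v.
Proof. by rewrite !(dotvC w) dotvDl. Qed.
Lemma dotvZr a u w : dotv w (a *: u) = a * dotv w u.
Proof. by rewrite !(dotvC w) dotvZl. Qed.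
Lemma dotvNr u w : dotv w (- u) = - dotv w u.
Proof. by rewrite !(dotvC w) dotvNl. Qed.
Lemma dotvBr u v w : dotv w (u - v) = dotv w u - dotv w v.
Proof. by rewrite !(dotvC w) dotvBl. Qed.

Lemma sqnorm_ge0 u : 0 <= sqnorm u.
Proof. rewrite /sqnorm dotvE; apply: sumr_ge0 => i _; exact: mulr_ge0 _ _ || exact: sqr_ge0. Qed.

End Dot.


Lemma is_derive_shift0 (R : realType) (f : R -> R) (c df : R) :
  is_derive (0:R) (1:R) (fun s => f (s + c)) df -> is_derive c (1:R) f df.
Proof.
move=> [H1 H2].
split.
  move: H1; rewrite /derivable /= add0r.
  by under eq_fun do rewrite addr0; move=> H; exact: H.
rewrite -H2 /derive /= add0r.
by under [in RHS]eq_fun do rewrite addr0.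
Qed.



Lemma deriv_line (R : realType) (d : nat) (F : 'cV[R]_d -> R) gradF (u v : 'cV[R]_d) (c : R) :
  is_gradient F gradF ->
  is_derive c (1:R) (fun t : R => F (u + t *: v)) (dotv (gradF (u + c *: v)) v).
Proof.
move=> Hg; apply: is_derive_shift0.
have -> : (fun s : R => F (u + (s + c) *: v)) = (fun s => F ((u + c *: v) + s *: v)).
  by apply: funext => s; rewrite scalerDl (addrC (s *: v)) addrA.
exact: Hg.
Qed.

Lemma dot_bound (R : realType) (d : nat) (w v : 'cV[R]_d) (M : R) :
  0 < M -> enorm w <= M * enorm v ->
  dotv w v <= M * sqnorm v /\ - (M * sqnorm v) <= dotv w v.
Proof.
move=> M0 H.
have sw : sqnorm w <= M ^+ 2 * sqnorm v.
  have := H; rewrite /enorm => H'.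
  have : Num.sqrt (sqnorm w) ^+ 2 <= (M * Num.sqrt (sqnorm v)) ^+ 2.
    by rewrite ler_sqr // nnegrE ?mulr_ge0 ?sqrtr_ge0 // ltW.
  by rewrite exprMn !sqr_sqrtr ?sqnorm_ge0.
have h1 := sqnorm_ge0 (w - M *: v).
have h2 := sqnorm_ge0 (w + M *: v).
move: h1 h2; rewrite /sqnorm !(dotvDl, dotvDr, dotvBl, dotvBr, dotvNl, dotvNr, dotvZl, dotvZr) (dotvC v w).
rewrite -/(sqnorm w) -/(sqnorm v) in sw *.
move=> h1 h2; split.
- have : M * dotv w v <= M * (M * sqnorm v) by nra.
  by rewrite ler_pM2l.
- have : M * (- (M * sqnorm v)) <= M * dotv w v by nra.
  by rewrite ler_pM2l.
Qed.

Local Open Scope classical_set_scope.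
Local Open Scope ring_scope.
Lemma taylor_e (R : realType) (d : nat) (F : 'cV[R]_d -> R) gradF (L : R) (u v : 'cV[R]_d) (e : R) :
  is_gradient F gradF -> L_smooth gradF L -> 0 < L -> (e = 1 \/ e = -1) ->
  e * (F (u + v) - F u - dotv (gradF u) v) <= L / 2 * sqnorm v.
Proof.
move=> Hg HL L0 He.
set D0 := dotv (gradF u) v.
set W := sqnorm v.
pose g := fun t : R => e * (F (u + t *: v) - D0 * t) - (L / 2 * W) * (t * t).
have Dg : forall t : R, is_derive t (1:R) g
   (e * (dotv (gradF (u + t *: v)) v - D0) - (L / 2 * W) * (t + t)).
  move=> t.
  have d1 := deriv_line u v t Hg.
  have d2 : is_derive t (1:R) (fun s : R => D0 * s) D0.
    apply: (is_derive_eq (is_deriveZ D0 (is_derive_id t (1:R)))); exact: mulr1.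
  have d3 : is_derive t (1:R) (fun s : R => s * s) (t + t).
    apply: (is_derive_eq (is_deriveM (is_derive_id t (1:R)) (is_derive_id t (1:R)))); by rewrite /GRing.scale /= mulr1.
  exact: (is_deriveB (is_deriveZ e (is_deriveB d1 d2)) (is_deriveZ (L/2*W) d3)).
have [c /andP [c0 c1] Hc] := MVT ltr01 (fun t _ => Dg t)
   (derivable_within_continuous (fun t _ => (Dg t).(ex_derive))).
have en : enorm (gradF (u + c *: v) - gradF u) <= (L * c) * enorm v.
  have := HL (u + c *: v) u; rewrite addrAC subrr add0r.
  suff -> : enorm (c *: v) = c * enorm v by rewrite mulrA.
  rewrite /enorm /sqnorm dotvZl dotvZr mulrA -expr2 sqrtrM ?sqr_ge0 // sqrtr_sqr ger0_norm //.
  by rewrite ltW.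
have [b1 b2] := dot_bound (mulr_gt0 L0 c0) en.
move: Hc b1 b2; rewrite /g /= !dotvBl -/D0 -/W scale0r scale1r addr0 !mul0r !mulr0 !subr0 !mulr1.
case: He => ->; move=> Hc b1 b2; nra.
Qed.


Lemma lim_arg (R : realType) (a b C : R) :
  0 <= C -> (forall t : R, 0 < t -> t <= 1 -> a - C * t <= b) -> a <= b.
Proof.
move=> C0 H; rewrite leNgt; apply/negP => ba.
have p : 0 < a - b + C + 1 by lra.
have t0 : 0 < (a - b) / (a - b + C + 1) by rewrite divr_gt0 // subr_gt0.
have t1 : (a - b) / (a - b + C + 1) <= 1 by rewrite ler_pdivrMr // mul1r; lra.
have := H _ t0 t1.
have : (a - b) / (a - b + C + 1) * (a - b + C + 1) = a - b by rewrite divfK // gt_eqF.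
move: t0; set t := (a - b) / _ => t0 E Ht.
nra.
Qed.

Lemma sc_first (R : realType) (d : nat) (F : 'cV[R]_d -> R) gradF (L mu : R) (y z : 'cV[R]_d) :
  is_gradient F gradF -> L_smooth gradF L -> 0 < L -> 0 <= mu -> strongly_convex F mu ->
  mu / 2 * sqnorm (z - y) <= bregman F gradF z y.
Proof.
move=> Hg HL L0 mu0 Hsc.
have [w ->] : exists w, z = y + w by exists (z - y); rewrite addrCA subrr addr0.
have -> : y + w - y = w by rewrite addrAC subrr add0r.
rewrite /bregman.
apply: (@lim_arg _ _ _ ((L + mu) / 2 * sqnorm w)).
  by apply: mulr_ge0; [apply: divr_ge0; lra| exact: sqnorm_ge0].
move=> t t0 t1.
have hc := Hsc (y + w) y t (ltW t0) t1.
have ht := taylor_e y (t *: w) Hg HL L0 (or_intror erefl).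
have e1 : t *: (y + w) + (1 - t) *: y = y + t *: w.
  by apply/matrixP => i j; rewrite !mxE; ring.
move: hc ht; rewrite /= e1 /sqnorm !(dotvDl, dotvDr, dotvBl, dotvBr, dotvNl, dotvNr, dotvZl, dotvZr) ?(dotvC w y).
move=> hc ht.
have : t * (mu / 2 * dotv w w - (L + mu) / 2 * dotv w w * t) <=
       t * (F (y + w) - F y - (dotv (gradF y) y + dotv (gradF y) w - dotv (gradF y) y)) by lra.
by rewrite ler_pM2l.
Qed.

Lemma coco (R : realType) (d : nat) (F : 'cV[R]_d -> R) gradF (L mu alpha : R) (x xs : 'cV[R]_d) :
  is_gradient F gradF -> L_smooth gradF L -> 0 < L -> strongly_convex F mu ->
  0 <= alpha -> alpha <= mu ->
  sqnorm (gradF x - gradF xs - alpha *: (x - xs)) <= 2 * L * bregman F gradF x xs.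
Proof.
move=> Hg HL L0 Hsc a0 amu.
have mu0 : 0 <= mu by apply: le_trans amu.
have [r ->] : exists r, x = xs + r by exists (x - xs); rewrite addrCA subrr addr0.
have -> : xs + r - xs = r by rewrite addrAC subrr add0r.
have [c Ec] : exists c, gradF (xs + r) = gradF xs + c + alpha *: r.
  by exists (gradF (xs + r) - gradF xs - alpha *: r); apply/matrixP => i j; rewrite !mxE; ring.
set s := L^-1.
have hi := sc_first (xs) (xs + r + (- s) *: c) Hg HL L0 mu0 Hsc.
have hii := taylor_e (xs + r) ((- s) *: c) Hg HL L0 (or_introl erefl).
have hQ : alpha / 2 * sqnorm (r + (- s) *: c) <= mu / 2 * sqnorm (r + (- s) *: c).
  by apply: ler_wpM2r; [exact: sqnorm_ge0| lra].
have E : xs + r + - s *: c - xs = r + (- s) *: c.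
  by apply/matrixP => i j; rewrite !mxE; ring.
rewrite E in hi.
move: hi hii hQ; rewrite /bregman Ec.
have -> : gradF xs + c + alpha *: r - gradF xs - alpha *: r = c.
  by apply/matrixP => i j; rewrite !mxE; ring.
rewrite /sqnorm !(dotvDl, dotvDr, dotvBl, dotvBr, dotvNl, dotvNr, dotvZl, dotvZr) ?(dotvC c r) ?(dotvC r (gradF xs)) ?(dotvC c (gradF xs)).
move=> hi hii hQ.
have hr : 0 <= alpha / 2 * dotv r r by apply: mulr_ge0; [lra| exact: sqnorm_ge0].
have hc : 0 <= alpha / 2 * (s * (s * dotv c c)).
  by apply: mulr_ge0; [lra| rewrite mulrA; apply: mulr_ge0; [exact: sqr_ge0 | exact: sqnorm_ge0]].
have h1 : (s - L * (s * s) / 2) * dotv c c <=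
   F (xs + r) - F xs - (dotv (gradF xs) xs + dotv (gradF xs) r - dotv (gradF xs) xs) by lra.
have h2 : 2 * L * (s - L * (s * s) / 2) = 1 by rewrite /s; field; rewrite gt_eqF.
have H := ler_wpM2l (_ : 0 <= 2 * L) h1.
rewrite mulrA h2 mul1r in H; apply: H; lra.
Qed.

End Helpers.
Import Helpers.
Local Open Scope ring_scope.


Theorem lemma4 (R : realType) (d p : nat) (F : 'cV[R]_d -> R) (gradF : 'cV[R]_d -> 'cV[R]_d)
  (L mu : R) (K : 'M[R]_(p, d)) (b : 'cV[R]_p) (xstar : 'cV[R]_d) (ystar : 'cV[R]_p)
  (x0 : 'cV[R]_d) (eta theta alpha tau : R) :
  0 < mu -> mu <= L ->
  is_gradient F gradF -> L_smooth gradF L -> strongly_convex F mu ->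
  K != 0 ->
  (exists z : 'cV[R]_d, b = K *m z) ->
  K *m xstar = b ->
  (forall x : 'cV[R]_d, K *m x = b -> F xstar <= F x) ->
  (exists z : 'cV[R]_d, ystar = K *m z) ->
  gradF xstar + K^T *m ystar = 0 ->
  0 < eta -> 0 < theta -> 0 <= alpha -> alpha <= mu ->
  forall k : nat,
    let xk := algB_x gradF K b eta theta alpha tau x0 k in
    let xk1 := algB_x gradF K b eta theta alpha tau x0 k.+1 in
    let yk1 := algB_y gradF K b eta theta alpha tau x0 k.+1 in
    let xgk := algB_xgk gradF K b eta theta alpha tau x0 k in
    - (1 / (2 * eta)) * sqnorm (xk1 - xk)
      <= - (eta / 4) * sqnorm (K^T *m yk1 - K^T *m ystar)
         + eta * alpha ^+ 2 * sqnorm (xk1 - xstar)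
         + 2 * eta * L * bregman F gradF xgk xstar.
Proof.
move=> mu0 muL Hg HL Hsc _ _ _ _ _ Hopt eta0 _ a0 amu k.
rewrite [is_true _]/=.
set xk := algB_x gradF K b eta theta alpha tau x0 k.
set xk1 := algB_x gradF K b eta theta alpha tau x0 k.+1.
set yk1 := algB_y gradF K b eta theta alpha tau x0 k.+1.
set xgk := algB_xgk gradF K b eta theta alpha tau x0 k.
have L0 : 0 < L by lra.
have Hc := coco xgk xstar Hg HL L0 Hsc a0 amu.
have Ex : xk1 = (1 + eta * alpha)^-1 *: (xk - eta *: (gradF xgk - alpha *: xgk + K^T *m yk1)).
  by [].
have Ed : xk1 - xk = (- eta) *: ((K^T *m yk1 - K^T *m ystar) + alpha *: (xk1 - xstar)
        + (gradF xgk - gradF xstar - alpha *: (xgk - xstar))).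
  rewrite Ex; clear -Hopt eta0 a0.
  move: Hopt; move: (K^T *m ystar) (gradF xstar) (K^T *m yk1) (gradF xgk) => KYs gs KY G Hopt.
  apply/matrixP => i j; have := congr1 (fun M : 'cV[R]_d => M i j) Hopt.
  rewrite !mxE => h.
  have -> : gs i j = - KYs i j by apply/eqP; rewrite -subr_eq0 opprK h.
  by field; rewrite gt_eqF //; apply: ltr_pwDl => //; exact: mulr_ge0 (ltW eta0) a0.
rewrite Ed; clear Ed Ex.
move: Hc; move: (K^T *m yk1 - K^T *m ystar) (xk1 - xstar) (gradF xgk - gradF xstar - alpha *: (xgk - xstar))
  (bregman F gradF xgk xstar) => a r c D Hc.
have -> : - (1 / (2 * eta)) * sqnorm (- eta *: (a + alpha *: r + c)) = - (eta / 2) * sqnorm (a + alpha *: r + c).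
  by rewrite /sqnorm dotvZl dotvZr; field; rewrite gt_eqF.
have n1 := mulr_ge0 (ltW eta0) (sqnorm_ge0 (a + 2 *: (alpha *: r) + 2 *: c)).
have n2 := mulr_ge0 (ltW eta0) (sqnorm_ge0 (alpha *: r - c)).
have n3 := ler_wpM2l (ltW eta0) Hc.
move: n1 n2 n3.
rewrite /sqnorm !(dotvDl, dotvDr, dotvBl, dotvBr, dotvNl, dotvNr, dotvZl, dotvZr) ?(dotvC r a) ?(dotvC c a) ?(dotvC c r).
move=> n1 n2 n3.
rewrite expr2; lra.
Qed.
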